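(* For every integer $T\ge 5$ and every $\sigma\in\mathfrak S_3$, the vector $\sigma c$ with $c=[T,\,T,\,-(T-2),\,1,\,-(T-2),\,1]$ defines a facet of $P^T$.
   Context: For an integer $T\ge 2$, let $\Omega_T$ be the set of words $w=s_1s_2\cdots s_T$ over $\{1,2,3\}$ with $s_l\neq s_{l+1}$ for $l=1,\dots,T-1$. For $w\in\Omega_T$ and an ordered pair $ij$, $i\neq j$, let $x_{ij}(w)$ be the number of indices $1\le l\le T-1$ with $s_ls_{l+1}=ij$. Vectors of $\mathbb R^6$ are indexed in the order $[x_{12},x_{13},x_{21},x_{23},x_{31},x_{32}]$. Let $a_w=[x_{12}(w),\dots,x_{32}(w)]$ and $P^T=\mathrm{conv}\{a_w:w\in\Omega_T\}$. $\mathfrak S_3$ acts on $\mathbb R^6$ by $(\sigma c)_{ij}=c_{\sigma(i)\sigma(j)}$. A vector $c$ defines a facet of $P^T$ if $c\cdot a_w\ge0$ for all $w\in\Omega_T$ and $\{x\in P^T: c\cdot x=0\}$ is a facet of $P^T$. *)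

(* Defs.v *)
From mathcomp Require Import all_boot all_order all_algebra.
From mathcomp Require Import fingroup perm.
Set Implicit Arguments. Unset Strict Implicit. Unset Printing Implicit Defensive.
Import Order.TTheory GRing.Theory Num.Theory.
Local Open Scope ring_scope.

(* Letters {1,2,3} are represented by 'I_3 = {0,1,2}.
   Coordinates of R^6 are indexed by 'I_6 in the order
   [x12, x13, x21, x23, x31, x32], i.e. k |-> pair_of k below. *)

Definition pair_of (k : 'I_6) : 'I_3 * 'I_3 :=
  match val k with
  | 0 => (inord 0, inord 1)
  | 1 => (inord 0, inord 2)
  | 2 => (inord 1, inord 0)
  | 3 => (inord 1, inord 2)
  | 4 => (inord 2, inord 0)
  | _ => (inord 2, inord 1)
  end.

(* index of the ordered pair ij (i != j) *)
Definition idx_of (i j : 'I_3) : 'I_6 :=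
  inord (2 * val i + (if val j < val i then val j else (val j).-1))%N.

Definition Omega (T : nat) (w : T.-tuple 'I_3) : bool :=
  [forall l : 'I_T, (l.+1 < T)%N ==> (tnth w l != nth ord0 w l.+1)].

(* x_ij(w) = #{ 1 <= l <= T-1 : s_l s_{l+1} = ij }  (0-based here) *)
Definition xcount (T : nat) (w : T.-tuple 'I_3) (i j : 'I_3) : nat :=
  #|[set l : 'I_T | (l.+1 < T)%N && (tnth w l == i) && (nth ord0 w l.+1 == j)]|.

Definition avec (R : nzRingType) (T : nat) (w : T.-tuple 'I_3) : 'rV[R]_6 :=
  \row_k (xcount w (pair_of k).1 (pair_of k).2)%:R.

Arguments avec : clear implicits.
Arguments avec R {T} w.

Definition dot (R : nzRingType) (c x : 'rV[R]_6) : R := \sum_k c 0 k * x 0 k.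

Definition PT (R : realFieldType) (T : nat) (x : 'rV[R]_6) : Prop :=
  exists lam : T.-tuple 'I_3 -> R,
    (forall w, 0 <= lam w) /\
    \sum_(w | Omega w) lam w = 1 /\
    x = \sum_(w | Omega w) lam w *: avec R w.

Arguments PT : clear implicits.

Definition act (R : Type) (s : {perm 'I_3}) (c : 'rV[R]_6) : 'rV[R]_6 :=
  \row_k c 0 (idx_of (s (pair_of k).1) (s (pair_of k).2)).

Definition aff_indep (R : fieldType) (k : nat) (p : 'I_k.+1 -> 'rV[R]_6) : Prop :=
  \rank (\matrix_(i < k) (p (lift ord0 i) - p ord0)) = k.

Definition affdim (R : fieldType) (S : 'rV[R]_6 -> Prop) (d : nat) : Prop :=
  (exists p : 'I_d.+1 -> 'rV[R]_6, (forall i, S (p i)) /\ aff_indep p) /\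
  (forall k (p : 'I_k.+1 -> 'rV[R]_6), (forall i, S (p i)) -> aff_indep p -> (k <= d)%N).

Definition is_facet (R : fieldType) (P F : 'rV[R]_6 -> Prop) : Prop :=
  exists d, affdim P d.+1 /\ affdim F d.

Definition defines_facet (R : realFieldType) (T : nat) (c : 'rV[R]_6) : Prop :=
  (forall w : T.-tuple 'I_3, Omega w -> 0 <= dot c (avec R w)) /\
  is_facet (PT R T) (fun x => PT R T x /\ dot c x = 0).

Arguments defines_facet : clear implicits.

Definition cvec (R : nzRingType) (T : nat) : 'rV[R]_6 :=
  \row_k (match val k with
          | 0 | 1 => (T%:R : R)
          | 2 | 4 => - (T%:R - 2)
          | _ => 1
          end).
Arguments cvec : clear implicits.

(* Main.v *)
Require Import Defs.
From mathcomp Require Import all_boot all_order all_algebra.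
From mathcomp Require Import fingroup perm.
From mathcomp Require Import ring lra zify.
Set Implicit Arguments. Unset Strict Implicit. Unset Printing Implicit Defensive.
Import Order.TTheory GRing.Theory Num.Theory.
Local Open Scope ring_scope.

Definition o0 : 'I_3 := @Ordinal 3 0 isT.
Definition o1 : 'I_3 := @Ordinal 3 1 isT.
Definition o2 : 'I_3 := @Ordinal 3 2 isT.
Definition k0 : 'I_6 := @Ordinal 6 0 isT.
Definition k1 : 'I_6 := @Ordinal 6 1 isT.
Definition k2 : 'I_6 := @Ordinal 6 2 isT.
Definition k3 : 'I_6 := @Ordinal 6 3 isT.
Definition k4 : 'I_6 := @Ordinal 6 4 isT.
Definition k5 : 'I_6 := @Ordinal 6 5 isT.

Lemma inord0 : (inord 0 : 'I_3) = o0. Proof. by apply: val_inj; rewrite /= inordK. Qed.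
Lemma inord1 : (inord 1 : 'I_3) = o1. Proof. by apply: val_inj; rewrite /= inordK. Qed.
Lemma inord2 : (inord 2 : 'I_3) = o2. Proof. by apply: val_inj; rewrite /= inordK. Qed.

Lemma sum6 (V : nmodType) (F : 'I_6 -> V) :
  \sum_(k < 6) F k = F k0 + F k1 + F k2 + F k3 + F k4 + F k5.
Proof.
rewrite !big_ord_recl big_ord0 addr0 /= !addrA.
by congr (_ + _ + _ + _ + _ + _); congr F; apply: val_inj.
Qed.

Lemma pk0 : pair_of k0 = (o0, o1). Proof. by rewrite /pair_of /= inord0 inord1. Qed.
Lemma pk1 : pair_of k1 = (o0, o2). Proof. by rewrite /pair_of /= inord0 inord2. Qed.
Lemma pk2 : pair_of k2 = (o1, o0). Proof. by rewrite /pair_of /= inord0 inord1. Qed.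
Lemma pk3 : pair_of k3 = (o1, o2). Proof. by rewrite /pair_of /= inord1 inord2. Qed.
Lemma pk4 : pair_of k4 = (o2, o0). Proof. by rewrite /pair_of /= inord0 inord2. Qed.
Lemma pk5 : pair_of k5 = (o2, o1). Proof. by rewrite /pair_of /= inord1 inord2. Qed.


Fixpoint cnt (s : seq 'I_3) (i j : 'I_3) : nat :=
  if s is x :: t then
    ((if t is y :: _ then ((x == i) && (y == j) : nat) else 0) + cnt t i j)%N
  else 0%N.

Lemma cnt_sum s i j : cnt s i j =
  (\sum_(0 <= l < size s) ((l.+1 < size s) && (nth ord0 s l == i) && (nth ord0 s l.+1 == j) : nat))%N.
Proof.
elim: s => [|x t IH]; first by rewrite big_nil.
rewrite /= big_nat_recl //= IH; congr (_ + _)%N; first by case: t {IH}.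

Qed.

Lemma xcount_cnt T (w : T.-tuple 'I_3) i j : xcount w i j = cnt w i j.
Proof.
rewrite cnt_sum size_tuple /xcount cardsE -sum1_card big_mkcond /= big_mkord.
apply: eq_bigr => l _; rewrite unfold_in (tnth_nth ord0).
by case: ifP.
Qed.

Lemma ord3_cases (x : 'I_3) : [\/ x = o0, x = o1 | x = o2].
Proof.
case: x => [[|[|[|m]]] Hm]; last by [].
- by apply: Or31; apply: val_inj.
- by apply: Or32; apply: val_inj.
- by apply: Or33; apply: val_inj.
Qed.

Lemma mulr_b (R : nzRingType) (x : R) (b : bool) : x * (b : nat)%:R = if b then x else 0.
Proof. by case: b; rewrite ?mulr1 ?mulr0. Qed.

Lemma pair_sum (R : nzRingType) (F : 'I_3 -> 'I_3 -> R) x y : x != y ->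
  \sum_k F (pair_of k).1 (pair_of k).2 * ((x == (pair_of k).1) && (y == (pair_of k).2) : nat)%:R
  = F x y.
Proof.
rewrite sum6 pk0 pk1 pk2 pk3 pk4 pk5 !mulr_b.
by have [->|->|->] := ord3_cases x; have [->|->|->] := ord3_cases y;
  rewrite //= ?addr0 ?add0r.
Qed.

Fixpoint walk (R : nzRingType) (F : 'I_3 -> 'I_3 -> R) (s : seq 'I_3) : R :=
  if s is x :: t then (if t is y :: _ then F x y else 0) + walk F t else 0.

Fixpoint cd (s : seq 'I_3) : bool :=
  if s is x :: t then (if t is y :: _ then x != y else true) && cd t else true.

Lemma walk_sum (R : nzRingType) (F : 'I_3 -> 'I_3 -> R) s : cd s ->
  \sum_k F (pair_of k).1 (pair_of k).2 * (cnt s (pair_of k).1 (pair_of k).2)%:R = walk F s.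
Proof.
elim: s => [|x t IH] /=; first by rewrite big1 // => k _; rewrite mulr0.
move=> /andP[Hxy /IH {}IH].
under eq_bigr => k _ do rewrite natrD mulrDr.
rewrite big_split /= IH; congr (_ + _).
case: t {IH} Hxy => [|y t] Hxy /=; last by rewrite pair_sum.
by rewrite big1 // => k _; rewrite mulr0.
Qed.

Lemma walkD (R : nzRingType) (F G : 'I_3 -> 'I_3 -> R) s :
  walk (fun i j => F i j + G i j) s = walk F s + walk G s.
Proof.
elim: s => [|x t IH] /=; first by rewrite addr0.
rewrite IH; case: t {IH} => [|y t]; first by rewrite /= !add0r.
by rewrite addrACA.
Qed.

Lemma walkM (R : comNzRingType) (c : R) (F : 'I_3 -> 'I_3 -> R) s :
  walk (fun i j => c * F i j) s = c * walk F s.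
Proof.
elim: s => [|x t IH] /=; first by rewrite mulr0.
by rewrite IH mulrDr; case: t {IH} => [|y t] /=; rewrite ?mulr0.
Qed.

Lemma walk1 (R : nzRingType) s : walk (fun _ _ => 1 : R) s = (size s).-1%:R.
Proof.
elim: s => [|x t IH] //=; rewrite IH; case: t {IH} => [|y t] /=; first by rewrite add0r.
by rewrite -natr1 addrC.
Qed.

Lemma walk_tel (R : nzRingType) (f : 'I_3 -> R) x t :
  walk (fun i j => f i - f j) (x :: t) = f x - f (last x t).
Proof.
elim: t x => [|y t IH] x /=; first by rewrite addr0 subrr.
by move: (IH y) => /= ->; rewrite addrA subrK.
Qed.

Lemma ord6_cases (k : 'I_6) : k = k0 \/ k = k1 \/ k = k2 \/ k = k3 \/ k = k4 \/ k = k5.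
Proof.
case: k => [[|[|[|[|[|[|m]]]]]] Hm]; last by [].
all: do ?[by left; apply: val_inj | right]; by apply: val_inj.
Qed.

Lemma pair_neq k : (pair_of k).1 != (pair_of k).2.
Proof.
by have [->|[->|[->|[->|[->|->]]]]] := ord6_cases k;
  rewrite ?pk0 ?pk1 ?pk2 ?pk3 ?pk4 ?pk5.
Qed.

Definition ind (R : nzRingType) (b : bool) : R := if b then 1 else 0.

Lemma cvec_idx (R : comNzRingType) T p q : p != q ->
  cvec R T 0 (idx_of p q) = (T%:R - 1) * (ind R (p == o0) - ind R (q == o0)) + 1.
Proof.
have E n : (n < 6)%N -> \val (inord n : 'I_6) = n by exact: inordK.
rewrite /idx_of /ind.
have [->|->|->] := ord3_cases p; have [->|->|->] := ord3_cases q => //= _;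
  rewrite mxE E //=; ring.
Qed.

Lemma perm_eq0 (s : {perm 'I_3}) p x : (s p == x) = (p == (s^-1)%g x).
Proof. by apply/eqP/eqP => [<-|->]; rewrite ?permK ?permKV. Qed.

Definition fa (R : nzRingType) (s : {perm 'I_3}) (i : 'I_3) : R := ind R (i == (s^-1)%g o0).

Lemma act_coef (R : comNzRingType) T (s : {perm 'I_3}) k :
  act s (cvec R T) 0 k =
  (T%:R - 1) * (fa R s (pair_of k).1 - fa R s (pair_of k).2) + 1.
Proof.
rewrite mxE cvec_idx; first by rewrite /fa !perm_eq0.
by rewrite (inj_eq perm_inj) pair_neq.
Qed.

Lemma cd_nth s : (forall l, (l.+1 < size s)%N -> nth ord0 s l != nth ord0 s l.+1) -> cd s.
Proof.
elim: s => [|x t IH] //= H; apply/andP; split.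
  by case: t {IH} H => [|y t] // H; exact: (H 0%N).
by apply: IH => l Hl; exact: (H l.+1).
Qed.

Lemma Omega_cd T (w : T.-tuple 'I_3) : Omega w -> cd w.
Proof.
move=> /forallP H; apply: cd_nth => l; rewrite size_tuple => Hl.
have Hl' : (l < T)%N by apply: ltnW.
by move: (H (Ordinal Hl')); rewrite /= Hl /= (tnth_nth ord0).
Qed.

Lemma avecE (R : nzRingType) T (w : T.-tuple 'I_3) k :
  avec R w 0 k = (cnt w (pair_of k).1 (pair_of k).2)%:R.
Proof. by rewrite mxE xcount_cnt. Qed.

Lemma walk_act (R : comNzRingType) T s (x : 'I_3) t :
  walk (fun i j => (T%:R - 1) * (fa R s i - fa R s j) + 1) (x :: t) =
  (T%:R - 1) * (fa R s x - fa R s (last x t)) + (size t)%:R.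
Proof. by rewrite walkD walkM walk_tel walk1. Qed.

Lemma dot_act (R : comNzRingType) T s (w : T.-tuple 'I_3) : Omega w -> (0 < T)%N ->
  dot (act s (cvec R T)) (avec R w) =
  (T%:R - 1) * (fa R s (head ord0 w) - fa R s (last ord0 w)) + (T.-1)%:R.
Proof.
move=> Hw HT; rewrite /dot.
under eq_bigr => k _ do rewrite act_coef avecE.
rewrite (walk_sum (fun i j => (T%:R - 1) * (fa R s i - fa R s j) + 1)) ?Omega_cd //.
have := size_tuple w; case: (tval w) => [|x t]; first by move=> E; rewrite -E in HT.
by move=> <-; rewrite walk_act.
Qed.

Lemma ub (R : fieldType) r k (U : 'M[R]_(r,6)) (p : 'I_k.+1 -> 'rV[R]_6) :
  \rank U = r -> (forall i, U *m (p i)^T = U *m (p ord0)^T) -> aff_indep p -> (k + r <= 6)%N.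
Proof.
move=> HU H; rewrite /aff_indep; set A := \matrix_(i < k) _ => HA.
have UA : U *m A^T = 0.
  apply/matrixP => a b; rewrite !mxE.
  have := congr1 (fun M : 'M[R]_(r,1) => M a 0) (H (lift ord0 b)); rewrite !mxE => E.
  under eq_bigr => j _ do rewrite !mxE mulrBr.
  rewrite sumrB; apply/eqP; rewrite subr_eq0; apply/eqP.
  move: E; congr (_ = _); apply: eq_bigr => j _; rewrite !mxE //.
have : (U <= kermx A^T)%MS by rewrite sub_kermx UA.
move/mxrankS; rewrite mxrank_ker mxrank_tr HA HU => Hr.
have Hk : (k <= 6)%N by rewrite -HA rank_leq_col.
move: Hr Hk; clear; lia.
Qed.

Lemma lb (R : fieldType) n (A : 'M[R]_(n,6)) (B : 'M[R]_(6,n)) :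
  A *m B = 1%:M -> \rank A = n.
Proof.
move=> H; apply/eqP; rewrite eqn_leq rank_leq_row /=.
by rewrite -{1}(mxrank1 R n) -H mxrankM_maxl.
Qed.

Lemma natr_pred (R : nzRingType) T : (0 < T)%N -> (T.-1)%:R = T%:R - 1 :> R.
Proof. by case: T => // T _; rewrite -natr1 addrK. Qed.

Lemma nonneg (R : realFieldType) T s (w : T.-tuple 'I_3) : (0 < T)%N -> Omega w ->
  0 <= dot (act s (cvec R T)) (avec R w).
Proof.
move=> HT Hw; rewrite dot_act // natr_pred //.
have HT1 : 0 <= T%:R - 1 :> R by rewrite subr_ge0 ler1n.
rewrite /fa /ind; case: ifP => _; case: ifP => _;
  rewrite ?subrr ?subr0 ?sub0r ?mulr0 ?add0r ?mulr1 ?mulrN1 ?addNr //.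
by rewrite addr_ge0.
Qed.

Lemma PT_avec (R : realFieldType) T (w : T.-tuple 'I_3) : Omega w -> PT R T (avec R w).
Proof.
move=> Hw; exists (fun v => if v == w then 1 else 0); split.
  by move=> v; case: ifP.
split.
  by rewrite (bigD1 w) //= eqxx big1 ?addr0 // => v /andP[_ /negbTE ->].
rewrite (bigD1 w) //= eqxx scale1r big1 ?addr0 // => v /andP[_ /negbTE ->].
by rewrite scale0r.
Qed.

Lemma dot_lin (R : realFieldType) T (u : 'rV[R]_6) (r : R) x :
  (forall v : T.-tuple 'I_3, Omega v -> dot u (avec R v) = r) -> PT R T x -> dot u x = r.
Proof.
move=> H [lam [_ [Hs ->]]].
rewrite /dot.
under eq_bigr => k _ do rewrite summxE mulr_sumr.
rewrite exchange_big /= -[RHS]mul1r -Hs mulr_suml.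
apply: eq_bigr => v Hv; rewrite -(H v Hv) /dot mulr_sumr.
by apply: eq_bigr => k _; rewrite mxE mulrCA.
Qed.

Definition ones6 (R : nzRingType) : 'rV[R]_6 := const_mx 1.
Definition gvec (R : nzRingType) (a : 'I_3) : 'rV[R]_6 :=
  \row_k (ind R ((pair_of k).1 == a) - ind R ((pair_of k).2 == a)).

Lemma dot_ones_avec (R : nzRingType) T (v : T.-tuple 'I_3) : Omega v ->
  dot (ones6 R) (avec R v) = (T.-1)%:R.
Proof.
move=> Hv; rewrite /dot.
under eq_bigr => k _ do rewrite avecE mxE.
by rewrite (walk_sum (fun _ _ => 1)) ?Omega_cd // walk1 size_tuple.
Qed.

Lemma dot_split (R : comNzRingType) T (s : {perm 'I_3}) a x : (s^-1)%g o0 = a ->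
  dot (act s (cvec R T)) x = (T%:R - 1) * dot (gvec R a) x + dot (ones6 R) x.
Proof.
move=> Ha; rewrite /dot mulr_sumr -big_split /=; apply: eq_bigr => k _.
by rewrite act_coef !mxE /fa Ha mulrDl mul1r mulrA.
Qed.

Lemma mulmx_trE (R : nzRingType) r (U : 'M[R]_(r,6)) (x : 'rV[R]_6) a b :
  (U *m x^T) a b = \sum_j U a j * x 0 j.
Proof. by rewrite mxE; apply: eq_bigr => j _; rewrite mxE (ord1 b). Qed.

Lemma qpath (a b d : 'I_3) : a != b -> b != d -> d != a ->
  forall n, exists Q', [/\ size Q' = n.+1, last b Q' = a & cd (b :: Q')].
Proof.
move=> Hab Hbd Hda.
suff H : forall n, (exists Q', [/\ size Q' = n.+1, last b Q' = a & cd (b :: Q')]) /\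
                 (exists Q', [/\ size Q' = n.+2, last b Q' = a & cd (b :: Q')]).
  by move=> n; case: (H n).
elim=> [|n [[Q' [H1 H2 H3]] [Q2 HQ2]]].
  split; first by exists [:: a]; split => //=; rewrite eq_sym Hab.
  by exists [:: d; a]; split => //=; apply/and3P.
split; first by exists Q2.
exists [:: a, b & Q']; split => //=; first by rewrite H1.
move: H3 => /= ->; rewrite andbT; apply/andP; split => //; by rewrite eq_sym.
Qed.

Lemma cnt_cat X b Q' p q :
  cnt (X ++ b :: Q') p q = (cnt (rcons X b) p q + cnt (b :: Q') p q)%N.
Proof.
elim: X => [|x X IH] //=.
rewrite IH addnA; congr (_ + _ + _)%N; by case: X {IH}.
Qed.

Lemma cd_cat X b Q' : cd (X ++ b :: Q') = cd (rcons X b) && cd (b :: Q').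
Proof.
elim: X => [|x X IH]; first by [].
rewrite [_ ++ _]/= [rcons _ _]/= [cd (x :: _)]/= [cd (x :: rcons _ _)]/= IH andbA.
by case: X {IH}.
Qed.

Lemma cd_nth2 s : cd s -> forall l, (l.+1 < size s)%N -> nth ord0 s l != nth ord0 s l.+1.
Proof.
elim: s => [|x t IH] //= /andP[H1 H2] [|l] Hl.
  by case: t {IH H2} H1 Hl.
exact: IH.
Qed.

Lemma cd_Omega T (w : T.-tuple 'I_3) : cd w -> Omega w.
Proof.
move=> H; apply/forallP => l; apply/implyP => Hl.
by rewrite (tnth_nth ord0); apply: cd_nth2; rewrite ?size_tuple.
Qed.

Definition Xw (a b d : 'I_3) (i : nat) : seq 'I_3 :=
  match i with
  | 0 => [:: b; a; d] | 1 => [:: b; d; a] | 2 => [:: d; a; d]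
  | 3 => [:: d; b; a] | 4 => [:: d; b; d] | _ => [:: a; b; a] end.

Definition MD (R : nzRingType) n a b d : 'M[R]_(n,6) :=
  \matrix_(i < n, k < 6) ((cnt (rcons (Xw a b d i.+1) b) (pair_of k).1 (pair_of k).2)%:R
                        - (cnt (rcons (Xw a b d 0) b) (pair_of k).1 (pair_of k).2)%:R).

Definition U2 (R : nzRingType) a : 'M[R]_(2,6) :=
  \matrix_(i < 2, k < 6) (if val i == 0%N then 1 else gvec R a 0 k).

Definition U1 (R : nzRingType) : 'M[R]_(1,6) := const_mx 1.

Lemma rankU1 (R : fieldType) : \rank (U1 R) = 1%N.
Proof.
apply: (@lb _ _ _ (\matrix_(k, j) (if k == k0 then 1 else 0))).
apply/matrixP => x y; rewrite !(ord1 x) !(ord1 y) !mxE sum6 !mxE /=.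
by rewrite mulr1 !mulr0 !addr0.
Qed.

Lemma Tneq (R : realFieldType) T : (5 <= T)%N -> T%:R - 1 != 0 :> R.
Proof. by move=> HT; rewrite subr_eq0 pnatr_eq1; apply/eqP => E; rewrite E in HT. Qed.

Lemma main_gen (R : realFieldType) T (s : {perm 'I_3}) (a b d : 'I_3)
  (B5 : 'M[R]_(6,5)) (B4 : 'M[R]_(6,4)) (B2 : 'M[R]_(6,2)) :
  (5 <= T)%N -> (s^-1)%g o0 = a -> a != b -> b != d -> d != a ->
  MD R 5 a b d *m B5 = 1%:M -> MD R 4 a b d *m B4 = 1%:M -> U2 R a *m B2 = 1%:M ->
  defines_facet R T (act s (cvec R T)).
Proof.
move=> HT Ha Hab Hbd Hda H5 H4 H2.
have HT0 : (0 < T)%N by apply: leq_trans HT.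
have Hba : b != a by rewrite eq_sym.
have Hdb : d != b by rewrite eq_sym.
have Had : a != d by rewrite eq_sym.
split; first by move=> w; apply: nonneg.
have [Q' [HQs HQl HQc]] := qpath Hab Hbd Hda (T - 5).
have Hx : forall i, size (Xw a b d i) = 3 by case=> [|[|[|[|[|i]]]]].
have Hsz : forall i, size (Xw a b d i ++ b :: Q') == T.
  by move=> i; rewrite size_cat Hx /= HQs; apply/eqP; move: HT; clear; lia.
pose wt i : T.-tuple 'I_3 := Tuple (Hsz i).
have Om : forall i, Omega (wt i).
  move=> i; apply: cd_Omega; rewrite /= cd_cat HQc andbT.
  by case: i => [|[|[|[|[|i]]]]]; rewrite /= ?Hab ?Hba ?Hbd ?Hdb ?Hda ?Had.
have Hlast : forall i, last ord0 (wt i) = a by move=> i; rewrite /= last_cat.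
have dotw : forall i, dot (act s (cvec R T)) (avec R (wt i)) =
     (T%:R - 1) * (ind R (head ord0 (Xw a b d i) == a) - 1) + (T.-1)%:R.
  move=> i; rewrite dot_act // Hlast /fa Ha /ind eqxx; congr (_ * (_ - _) + _).
  by case: i => [|[|[|[|[|i]]]]].
have onesPT : forall x, PT R T x -> dot (ones6 R) x = (T.-1)%:R.
  by move=> x; apply: dot_lin => v Hv; rewrite dot_ones_avec.
exists 4%N; split; split.
- exists (fun i : 'I_6 => avec R (wt i)); split; first by move=> i; apply: PT_avec.
  rewrite /aff_indep; transitivity (\rank (MD R 5 a b d)); last exact: lb H5.
  congr (\rank _); apply/matrixP.
  move=> i k; rewrite !mxE !xcount_cnt !cnt_cat !natrD.
  by rewrite opprD addrACA subrr addr0.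
- move=> k p Hp Hi.
  have C : forall i, U1 R *m (p i)^T = U1 R *m (p ord0)^T.
    move=> i; apply/matrixP => x y; rewrite !mulmx_trE.
    have E : forall v : 'rV[R]_6, \sum_j U1 R x j * v 0 j = dot (ones6 R) v.
      by move=> v; apply: eq_bigr => j _; rewrite !mxE.
    by rewrite !E !onesPT.
  by have := ub (rankU1 R) C Hi; rewrite addn1.
- exists (fun i : 'I_5 => avec R (wt i)); split.
    move=> i; split; first by apply: PT_avec.
    rewrite dotw natr_pred //.
    by case: i => [[|[|[|[|[|i]]]]] Hi] //=; rewrite /ind ?(negbTE Hba) ?(negbTE Hda) sub0r mulrN1 addNr.
  rewrite /aff_indep; transitivity (\rank (MD R 4 a b d)); last exact: lb H4.
  congr (\rank _); apply/matrixP.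
  move=> i k; rewrite !mxE !xcount_cnt !cnt_cat !natrD.
  by rewrite opprD addrACA subrr addr0.
- move=> k p Hp Hi.
  have Hg : forall x, PT R T x /\ dot (act s (cvec R T)) x = 0 -> dot (gvec R a) x = -1.
    move=> x [HxP Hd]; move: Hd; rewrite (dot_split _ _ Ha) onesPT // natr_pred // => Hd.
    have : (T%:R - 1) * (dot (gvec R a) x + 1) = 0 by rewrite mulrDr mulr1.
    by move/eqP; rewrite mulf_eq0 (negbTE (Tneq R HT)) /= addr_eq0 => /eqP.
  have C : forall i, U2 R a *m (p i)^T = U2 R a *m (p ord0)^T.
    move=> i; apply/matrixP => x y; rewrite !mulmx_trE.
    case: x => [[|[|?]] Hxx] //.
      have E : forall v : 'rV[R]_6, \sum_j U2 R a (Ordinal Hxx) j * v 0 j = dot (ones6 R) v.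
        by move=> v; apply: eq_bigr => j _; rewrite !mxE.
      by rewrite !E !onesPT //; [case: (Hp ord0) | case: (Hp i)].
    have E : forall v : 'rV[R]_6, \sum_j U2 R a (Ordinal Hxx) j * v 0 j = dot (gvec R a) v.
      by move=> v; apply: eq_bigr => j _; rewrite !mxE.
    by rewrite !E !Hg.
  by have := ub (lb H2) C Hi; rewrite addn2.
Qed.
Definition B5_0 : seq (seq int) := [:: [:: 0%Z; 0%Z; -1%Z; 0%Z; 1%Z]; [:: 0%Z; 0%Z; -2%Z; 0%Z; 1%Z]; [:: 1%Z; -1%Z; 1%Z; -1%Z; -1%Z]; [:: 1%Z; -1%Z; -1%Z; 0%Z; 0%Z]; [:: 1%Z; 0%Z; 1%Z; -1%Z; -1%Z]; [:: 0%Z; 0%Z; 0%Z; 0%Z; 0%Z]].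
Definition B4_0 : seq (seq int) := [:: [:: 1%Z; 0%Z; 0%Z; -1%Z]; [:: 1%Z; 0%Z; -1%Z; -1%Z]; [:: 0%Z; -1%Z; 0%Z; 0%Z]; [:: 1%Z; -1%Z; -1%Z; 0%Z]; [:: 0%Z; 0%Z; 0%Z; 0%Z]; [:: 0%Z; 0%Z; 0%Z; 0%Z]].
Definition B2_0 : seq (seq int) := [:: [:: 0%Z; 1%Z]; [:: 0%Z; 0%Z]; [:: 0%Z; 0%Z]; [:: 1%Z; -1%Z]; [:: 0%Z; 0%Z]; [:: 0%Z; 0%Z]].
Definition B5_1 : seq (seq int) := [:: [:: 1%Z; 0%Z; 1%Z; -1%Z; -1%Z]; [:: 0%Z; 0%Z; 0%Z; 0%Z; 0%Z]; [:: 0%Z; 0%Z; -2%Z; 0%Z; 1%Z]; [:: 0%Z; 0%Z; -1%Z; 0%Z; 1%Z]; [:: 1%Z; -1%Z; -1%Z; 0%Z; 0%Z]; [:: 1%Z; -1%Z; 1%Z; -1%Z; -1%Z]].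
Definition B4_1 : seq (seq int) := [:: [:: 0%Z; 0%Z; 0%Z; 0%Z]; [:: 0%Z; 0%Z; 0%Z; 0%Z]; [:: 1%Z; 0%Z; -1%Z; -1%Z]; [:: 1%Z; 0%Z; 0%Z; -1%Z]; [:: 1%Z; -1%Z; -1%Z; 0%Z]; [:: 0%Z; -1%Z; 0%Z; 0%Z]].
Definition B2_1 : seq (seq int) := [:: [:: 0%Z; 0%Z]; [:: 0%Z; 0%Z]; [:: 0%Z; 0%Z]; [:: 0%Z; 1%Z]; [:: 1%Z; -1%Z]; [:: 0%Z; 0%Z]].
Definition B5_2 : seq (seq int) := [:: [:: 1%Z; -1%Z; -1%Z; 0%Z; 0%Z]; [:: 1%Z; -1%Z; 1%Z; -1%Z; -1%Z]; [:: 0%Z; 0%Z; 0%Z; 0%Z; 0%Z]; [:: 1%Z; 0%Z; 1%Z; -1%Z; -1%Z]; [:: 0%Z; 0%Z; -1%Z; 0%Z; 1%Z]; [:: 0%Z; 0%Z; -2%Z; 0%Z; 1%Z]].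
Definition B4_2 : seq (seq int) := [:: [:: 1%Z; -1%Z; -1%Z; 0%Z]; [:: 0%Z; -1%Z; 0%Z; 0%Z]; [:: 0%Z; 0%Z; 0%Z; 0%Z]; [:: 0%Z; 0%Z; 0%Z; 0%Z]; [:: 1%Z; 0%Z; 0%Z; -1%Z]; [:: 1%Z; 0%Z; -1%Z; -1%Z]].
Definition B2_2 : seq (seq int) := [:: [:: 1%Z; -1%Z]; [:: 0%Z; 0%Z]; [:: 0%Z; 0%Z]; [:: 0%Z; 0%Z]; [:: 0%Z; 1%Z]; [:: 0%Z; 0%Z]].

Definition mkB (R : nzRingType) m n (L : seq (seq int)) : 'M[R]_(m,n) :=
  \matrix_(k, j) ((nth 0%Z (nth [::] L k) j)%:~R).

Ltac chk := apply/matrixP; case => [[|[|[|[|[|?]]]]] ?] //; case => [[|[|[|[|[|?]]]]] ?] //;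
  rewrite !mxE sum6 !mxE pk0 pk1 pk2 pk3 pk4 pk5 /ind /=; ring.

Theorem proposition6 (R : realFieldType) (T : nat) (s : {perm 'I_3}) :
  (5 <= T)%N -> defines_facet R T (act s (cvec R T)).
Proof.
move=> HT; have [Ha|Ha|Ha] := ord3_cases ((s^-1)%g o0).
- apply: (@main_gen R T s o0 o1 o2 (mkB R 6 5 B5_0) (mkB R 6 4 B4_0) (mkB R 6 2 B2_0) HT Ha) => //; chk.
- apply: (@main_gen R T s o1 o2 o0 (mkB R 6 5 B5_1) (mkB R 6 4 B4_1) (mkB R 6 2 B2_1) HT Ha) => //; chk.
- apply: (@main_gen R T s o2 o0 o1 (mkB R 6 5 B5_2) (mkB R 6 4 B4_2) (mkB R 6 2 B2_2) HT Ha) => //; chk.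
Qed.
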